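(* Let $G=(V,E)$ be a directed acyclic graph with real edge weights, let $s_1,t_1,s_2,t_2\in V$, let $E_\cap=E(s_1,t_1)\cap E(s_2,t_2)$, and let $\mathcal{B}$ be the set of vertex sets of the connected components of the undirected graph on vertex set $V$ obtained from $(V,E_\cap)$ by ignoring edge directions. If $(P_1,P_2)\in\Pi(s_1,t_1)\times\Pi(s_2,t_2)$ is a pair of paths with $V(P_1)\cap V(P_2)\neq\emptyset$, then there is $B\in\mathcal{B}$ with $V(P_1)\cap V(P_2)\subseteq B$.
   Context: $\Pi(x,y)$ is the set of shortest (minimum weight) paths from $x$ to $y$; $E(x,y)$ is the set of edges lying on at least one path in $\Pi(x,y)$; $V(P)$ is the vertex set of path $P$. *)

(* Defs.v *)
From Stdlib Require Import Relations.
From mathcomp Require Import all_boot all_order all_algebra.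
Set Implicit Arguments. Unset Strict Implicit. Unset Printing Implicit Defensive.
Import Order.TTheory GRing.Theory Num.Theory.
Local Open Scope ring_scope.

Definition is_path {V : finType} (e : rel V) (x y : V) (P : seq V) : Prop :=
  match P with
  | [::] => False
  | z :: q => [/\ z = x, path e z q & last z q = y]
  end.

Definition path_edges {V : finType} (P : seq V) : seq (V * V) := zip P (behead P).

Definition path_weight {R : numDomainType} {V : finType} (w : V -> V -> R)
  (P : seq V) : R := \sum_(uv <- path_edges P) w uv.1 uv.2.

Definition acyclic {V : finType} (e : rel V) : Prop :=
  forall (x : V) (q : seq V), path e x q -> x \notin q.

Definition shortest_path {R : realDomainType} {V : finType} (e : rel V)
  (w : V -> V -> R) (x y : V) (P : seq V) : Prop :=
  is_path e x y P /\
  forall Q, is_path e x y Q -> path_weight w P <= path_weight w Q.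

Definition on_shortest {R : realDomainType} {V : finType} (e : rel V)
  (w : V -> V -> R) (x y u v : V) : Prop :=
  exists P, shortest_path e w x y P /\ (u, v) \in path_edges P.

Definition Ecap_undir {R : realDomainType} {V : finType} (e : rel V)
  (w : V -> V -> R) (s1 t1 s2 t2 : V) (u v : V) : Prop :=
  (on_shortest e w s1 t1 u v /\ on_shortest e w s2 t2 u v) \/
  (on_shortest e w s1 t1 v u /\ on_shortest e w s2 t2 v u).

Definition is_component {R : realDomainType} {V : finType} (e : rel V)
  (w : V -> V -> R) (s1 t1 s2 t2 : V) (B : {set V}) : Prop :=
  exists v : V, forall u : V,
    u \in B <-> clos_refl_trans V (Ecap_undir e w s1 t1 s2 t2) v u.

(* Main.v *)
Require Import Defs.
From mathcomp Require Import all_boot all_order all_algebra.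
From Stdlib Require Import Relations ClassicalDescription.
Set Implicit Arguments. Unset Strict Implicit. Unset Printing Implicit Defensive.
Import Order.TTheory GRing.Theory Num.Theory.
Local Open Scope ring_scope.

Section Aux.
Variable V : finType.
Variable e : rel V.

Lemma pe_split (A B : seq V) (x : V) :
  path_edges (A ++ x :: B) = path_edges (rcons A x) ++ path_edges (x :: B).
Proof.
elim: A => [|a A IH] //=.
case: A IH => [|b A] IH //=.
rewrite /path_edges /= in IH *. by rewrite IH.
Qed.

Lemma pw_split (R : numDomainType) (w : V -> V -> R) (A B : seq V) (x : V) :
  path_weight w (A ++ x :: B) = path_weight w (rcons A x) + path_weight w (x :: B).
Proof. by rewrite /path_weight pe_split big_cat. Qed.

Lemma is_path_split (s t x : V) (A B : seq V) :
  is_path e s t (A ++ x :: B) <-> is_path e s x (rcons A x) /\ is_path e x t (x :: B).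
Proof.
case: A => [|a A] /=.
  split; first by case=> -> p l.
  by case=> -[-> _ _] [_ p l].
rewrite cat_path rcons_path last_cat last_rcons /=.
split.
  case=> -> /andP[p1 /andP[ex p2]] l; split => //; split => //.
  by rewrite p1 ex.
case=> [[-> /andP[p1 ex] _]] [_ p2 l]; split => //.
by rewrite p1 ex p2.
Qed.

Lemma pos_split (P : seq V) (x y : V) : x \in P -> y \in P -> x != y ->
  exists A M C, P = A ++ x :: M ++ y :: C \/ P = A ++ y :: M ++ x :: C.
Proof.
case/splitPr => p1 p2.
rewrite mem_cat in_cons => /orP[yp1|/orP[/eqP->|yp2]]; last first.
- case/splitPr: yp2 => M C _. by exists p1, M, C; left.
- by rewrite eqxx.
- case/splitPr: yp1 => A M _. exists A, M, p2; right. by rewrite -catA.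
Qed.

Lemma crt_path (r : relation V) (x : V) (q : seq V) :
  (forall u v, (u, v) \in path_edges (x :: q) -> r u v) ->
  clos_refl_trans V r x (last x q).
Proof.
elim: q x => [|b q IH] x H /=; first exact: rt_refl.
apply: rt_trans (rt_step _ _ _ _ (H x b _)) (IH b _).
  by rewrite /path_edges /= in_cons eqxx.
move=> u v huv; apply: H. by rewrite /path_edges /= in_cons huv orbT.
Qed.

Lemma crt_sym (r : relation V) : (forall u v, r u v -> r v u) ->
  forall x y, clos_refl_trans V r x y -> clos_refl_trans V r y x.
Proof.
move=> Hs x y; elim=> [a b /Hs h|a|a b c _ h1 _ h2].
- exact: rt_step.
- exact: rt_refl.
- exact: rt_trans h2 h1.
Qed.

End Aux.

Lemma exchange (R : realDomainType) (V : finType) (e : rel V)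
  (w : V -> V -> R) (s1 t1 s2 t2 x y : V) (A1 M1 C1 A2 M2 C2 : seq V) :
  shortest_path e w s1 t1 (A1 ++ x :: M1 ++ y :: C1) ->
  shortest_path e w s2 t2 (A2 ++ x :: M2 ++ y :: C2) ->
  forall u v, (u, v) \in path_edges (x :: rcons M1 y) ->
  on_shortest e w s2 t2 u v.
Proof.
move=> [ip1 sh1] [ip2 sh2] u v huv.
have [ia1 r1] := proj1 (is_path_split _ _ _ _ _ _) ip1.
have [im1 ic1] := proj1 (is_path_split e x t1 y (x :: M1) C1) r1.
have [ia2 r2] := proj1 (is_path_split _ _ _ _ _ _) ip2.
have [im2 ic2] := proj1 (is_path_split e x t2 y (x :: M2) C2) r2.
have ip1' : is_path e s1 t1 (A1 ++ x :: M2 ++ y :: C1).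
  apply/is_path_split; split => //.
  change (x :: M2 ++ y :: C1) with ((x :: M2) ++ y :: C1).
  by apply/is_path_split.
have ip2' : is_path e s2 t2 (A2 ++ x :: M1 ++ y :: C2).
  apply/is_path_split; split => //.
  change (x :: M1 ++ y :: C2) with ((x :: M1) ++ y :: C2).
  by apply/is_path_split.
have W : forall A M C, path_weight w (A ++ x :: M ++ y :: C) =
   path_weight w (rcons A x) + path_weight w (rcons (x :: M) y) + path_weight w (y :: C).
  move=> A M C; rewrite pw_split -addrA; congr (_ + _).
  change (x :: M ++ y :: C) with ((x :: M) ++ y :: C). by rewrite pw_split.
have le1 := sh1 _ ip1'.
rewrite !W lerD2r lerD2l in le1.
exists (A2 ++ x :: M1 ++ y :: C2); split.
  split => // Q hQ. apply: le_trans (sh2 _ hQ).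
  by rewrite !W lerD2r lerD2l.
rewrite pe_split mem_cat; apply/orP; right.
change (x :: M1 ++ y :: C2) with ((x :: M1) ++ y :: C2).
by rewrite pe_split mem_cat huv.
Qed.

Lemma seg_edges (V : finType) (A M C : seq V) x y u v :
  (u, v) \in path_edges (x :: rcons M y) ->
  (u, v) \in path_edges (A ++ x :: M ++ y :: C).
Proof.
move=> h; rewrite pe_split mem_cat; apply/orP; right.
change (x :: M ++ y :: C) with ((x :: M) ++ y :: C).
by rewrite pe_split mem_cat h.
Qed.

Lemma seg_conn (R : realDomainType) (V : finType) (e : rel V)
  (w : V -> V -> R) (s1 t1 s2 t2 x y : V) (A1 M1 C1 A2 M2 C2 : seq V) :
  shortest_path e w s1 t1 (A1 ++ x :: M1 ++ y :: C1) ->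
  shortest_path e w s2 t2 (A2 ++ x :: M2 ++ y :: C2) ->
  clos_refl_trans V (Ecap_undir e w s1 t1 s2 t2) x y.
Proof.
move=> h1 h2.
have -> : y = last x (rcons M1 y) by rewrite last_rcons.
apply: crt_path => u v huv; left; split.
  by exists (A1 ++ x :: M1 ++ y :: C1); split => //; apply: seg_edges.
exact: exchange h1 h2 u v huv.
Qed.

Lemma seg_path (V : finType) (e : rel V) s t x y A M C :
  is_path e s t (A ++ x :: M ++ y :: C) -> path e x (rcons M y).
Proof.
case/is_path_split => _.
change (x :: M ++ y :: C) with ((x :: M) ++ y :: C).
by case/is_path_split => -[].
Qed.

Theorem lemma18 (R : realDomainType) (V : finType) (e : rel V)
  (w : V -> V -> R) (s1 t1 s2 t2 : V) (P1 P2 : seq V) :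
  acyclic e ->
  shortest_path e w s1 t1 P1 ->
  shortest_path e w s2 t2 P2 ->
  (exists x, x \in P1 /\ x \in P2) ->
  exists B : {set V}, is_component e w s1 t1 s2 t2 B /\
    (forall x, x \in P1 -> x \in P2 -> x \in B).
Proof.
move=> ac h1 h2 [x0 [x01 x02]].
set r := Ecap_undir e w s1 t1 s2 t2.
pose pb (P : Prop) : bool := if excluded_middle_informative P then true else false.
have pbP : forall P, pb P <-> P.
  by move=> P; rewrite /pb; case: excluded_middle_informative.
have rsym : forall u v, r u v -> r v u.
  by move=> u v [h|h]; [right|left].
have cyc : forall a b M M', path e a (rcons M b) -> path e b (rcons M' a) -> False.
  move=> a b M M' p q.
  have := ac a (rcons M b ++ rcons M' a).
  rewrite cat_path p last_rcons q mem_cat !mem_rcons !in_cons eqxx !orbT.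
  by move/(_ isT).
exists [set u | pb (clos_refl_trans V r x0 u)]; split.
  by exists x0 => u; rewrite inE; apply: pbP.
move=> x xP1 xP2; rewrite inE; apply/pbP.
have [/eqP <-|nx] := boolP (x0 == x); first exact: rt_refl.
have [A [M [C E1]]] := pos_split x01 xP1 nx.
have [A' [M' [C' E2]]] := pos_split x02 xP2 nx.
case: E1 => E1; case: E2 => E2; move: (h1) (h2); rewrite E1 E2 => k1 k2.
- exact: seg_conn k1 k2.
- by case: (cyc _ _ _ _ (seg_path (proj1 k1)) (seg_path (proj1 k2))).
- by case: (cyc _ _ _ _ (seg_path (proj1 k1)) (seg_path (proj1 k2))).
- exact: crt_sym rsym _ _ (seg_conn k1 k2).
Qed.
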